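(* Let $G$ be a trigraph containing a fence gadget $F$ (with sides $A$, $B$) attached to a set $S$. In any partial contraction sequence from $G$, if the first contraction that involves two vertices of $V(F)$ involves a pair $(a_i,b_j)$ with $a_i\in A$, $b_j\in B$, then the vertex created by it has at least $3$ red neighbours whose parts intersect $V(F)$.
   Context: A trigraph $G$ consists of a vertex set $V(G)$ and two disjoint sets of unordered pairs of distinct vertices: black edges and red edges. Contracting two distinct vertices $u,v$ replaces them by a new vertex $w$ such that, for every other vertex $z$, $wz$ is black if $uz,vz$ are both black, a non-edge if both are non-edges, and red otherwise. In a partial contraction sequence from $G$, each vertex $u$ of a later trigraph corresponds to the set $u(G)$ (its part) of vertices of $G$ merged into it; a contraction of $u,u'$ involves a vertex $v$ of $G$ if $v\in u(G)\cup u'(G)$, and involves a pair $v,v'$ if $v\in u(G),v'\in u'(G)$ or vice versa. A fence gadget is a trigraph $F$ on $A\cup B$, $A=\{a_1,\dots,a_6\}$, $B=\{b_1,\dots,b_6\}$, whose black edges are those of the cycles $a_1a_2a_3a_4a_5a_6a_1$ and $b_1b_2b_3b_4b_5b_6b_1$ together with $b_1a_6$, and whose red edges are $a_ib_i$ for $i\in[6]$ and $a_ib_{i+1}$ for $i\in[5]$. Inside a trigraph $G$, a fence gadget $F$ is attached to a nonempty set $S\subseteq V(G)\setminus V(F)$ if every vertex of $A$ is joined by a black edge to every vertex of $S$ and no vertex of $B$ is adjacent to a vertex of $S$. *)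

(* Defs.v *)
From mathcomp Require Import all_boot.

Set Implicit Arguments. Unset Strict Implicit. Unset Printing Implicit Defensive.

Inductive ecol := NoE | BlackE | RedE.

Definition isRed (e : ecol) : bool := if e is RedE then true else false.

Record trigraph (V : finType) := Trigraph {
  tadj : V -> V -> ecol;
  tadj_sym : forall x y, tadj x y = tadj y x;
  tadj_irr : forall x, tadj x x = NoE }.

(* A trigraph obtained from G by contractions: its vertices are their parts
   (subsets of V(G)), together with the colouring between vertices. *)
Record cstate (V : finType) := CState {
  parts : {set {set V}};
  cadj : {set V} -> {set V} -> ecol }.

Definition init_state (V : finType) (G : trigraph V) : cstate V :=
  CState [set [set v] | v : V]
    (fun P Q => match [pick x | P == [set x]], [pick y | Q == [set y]] with
                | Some x, Some y => tadj G x y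
                | _, _ => NoE end).

(* Contraction rule for the edge wz from uz and vz. *)
Definition merge (e1 e2 : ecol) : ecol :=
  match e1, e2 with
  | BlackE, BlackE => BlackE
  | NoE, NoE => NoE
  | _, _ => RedE end.

Definition contract (V : finType) (s : cstate V) (u v : {set V}) : cstate V :=
  let w := u :|: v in
  CState ((parts s :\ u :\ v) :|: [set w])
    (fun P Q => if P == w then (if Q == w then NoE
                                else merge (cadj s u Q) (cadj s v Q))
                else if Q == w then merge (cadj s P u) (cadj s P v)
                else cadj s P Q).

Fixpoint run (V : finType) (s : cstate V) (l : seq ({set V} * {set V}))
  : option (cstate V) :=
  match l with
  | [::] => Some s
  | (u, v) :: l' =>
      if [&& u \in parts s, v \in parts s & u != v]
      then run (contract s u v) l' else None
  end.

Definition involves_pair (V : finType) (u u' : {set V}) (x y : V) : bool :=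
  ((x \in u) && (y \in u')) || ((x \in u') && (y \in u)).

(* Fence gadget, indices shifted: a_i is (a (i-1)), i = 1..6. *)
Definition cyc6 (i j : 'I_6) : bool :=
  (j == i.+1 %% 6 :> nat) || (i == j.+1 %% 6 :> nat).

Definition is_fence (V : finType) (G : trigraph V) (a b : 'I_6 -> V) : Prop :=
  [/\ injective a, injective b, (forall i j, a i != b j) &
   [/\ (forall i j, tadj G (a i) (a j) = if cyc6 i j then BlackE else NoE),
      (forall i j, tadj G (b i) (b j) = if cyc6 i j then BlackE else NoE) &
      (forall i j : 'I_6, tadj G (a i) (b j) =
         if (j == i :> nat) || (j == i.+1 :> nat) then RedE
         else if (i == 5 :> nat) && (j == 0 :> nat) then BlackE else NoE)]].

Definition fenceV (V : finType) (a b : 'I_6 -> V) : {set V} :=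
  [set x | [exists i, x == a i] || [exists i, x == b i]].

Definition attached (V : finType) (G : trigraph V) (a b : 'I_6 -> V)
  (S : {set V}) : Prop :=
  [/\ S != set0, S \subset ~: fenceV a b,
      (forall i, forall s, s \in S -> tadj G (a i) s = BlackE) &
      (forall i, forall s, s \in S -> tadj G (b i) s = NoE)].

(* Main.v *)
Require Import Defs.
From mathcomp Require Import all_boot.
Set Implicit Arguments. Unset Strict Implicit. Unset Printing Implicit Defensive.

Definition colA (i k : 'I_6) : ecol := if cyc6 i k then BlackE else NoE.
Definition colAB (i k : 'I_6) : ecol :=
  if (k == i :> nat) || (k == i.+1 :> nat) then RedE
  else if (i == 5 :> nat) && (k == 0 :> nat) then BlackE else NoE.
Definition c1 (i j : 'I_6) (t : bool * 'I_6) :=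
  if t.1 then colAB i t.2 else colA i t.2.
Definition c2 (i j : 'I_6) (t : bool * 'I_6) :=
  if t.1 then colA j t.2 else colAB t.2 j.
Definition ords : seq 'I_6 := [:: @Ordinal 6 0 erefl; @Ordinal 6 1 erefl; @Ordinal 6 2 erefl;
  @Ordinal 6 3 erefl; @Ordinal 6 4 erefl; @Ordinal 6 5 erefl].
Lemma ordsP (i : 'I_6) : i \in ords.
Proof. case: i => [[|[|[|[|[|[|n]]]]]] H] //. Qed.
Definition Yseq (i j : 'I_6) : seq (bool * 'I_6) :=
  [seq t <- [seq (bb, k) | bb <- [:: false; true], k <- ords] |
    (t != (false, i)) && (t != (true, j)) && isRed (Defs.merge (c1 i j t) (c2 i j t))].
Lemma Ycheck : all (fun i => all (fun j => (3 <= size (Yseq i j)) && uniq (Yseq i j)) ords) ords.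
Proof. vm_compute. reflexivity. Qed.

Lemma run_cat (V : finType) (s : cstate V) l1 l2 :
  run s (l1 ++ l2) = obind (fun s1 => run s1 l2) (run s l1).
Proof.
elim: l1 s => [|[u v] l1 IH] s //=. by case: ifP.
Qed.

Definition inv (V : finType) (G : trigraph V) (s : cstate V) : Prop :=
  (forall x, exists2 P, P \in parts s & x \in P) /\
  (forall P Q, P \in parts s -> Q \in parts s -> P != Q ->
     (cadj s P Q = BlackE -> forall p q, p \in P -> q \in Q -> tadj G p q = BlackE) /\
     (cadj s P Q = NoE -> forall p q, p \in P -> q \in Q -> tadj G p q = NoE)).

Lemma merge_BB e1 e2 : Defs.merge e1 e2 = BlackE -> e1 = BlackE /\ e2 = BlackE.
Proof. by case: e1; case: e2. Qed.
Lemma merge_NN e1 e2 : Defs.merge e1 e2 = NoE -> e1 = NoE /\ e2 = NoE.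
Proof. by case: e1; case: e2. Qed.

Lemma inv_init (V : finType) (G : trigraph V) : inv G (init_state G).
Proof.
split.
  by move=> x; exists [set x]; [apply/imsetP; exists x | rewrite inE].
move=> P Q /imsetP [x _ ->] /imsetP [y _ ->] _ /=.
case: pickP => [x' /eqP /set1_inj ->|/(_ x)]; last by rewrite eqxx.
case: pickP => [y' /eqP /set1_inj ->|/(_ y)]; last by rewrite eqxx.
by split=> H p q; rewrite !inE => /eqP -> /eqP ->.
Qed.

Lemma inv_contract (V : finType) (G : trigraph V) s u v :
  inv G s -> u \in parts s -> v \in parts s -> u != v -> inv G (contract s u v).
Proof.
move=> [cov col] Hu Hv Huv; split.
  move=> x; have [P HP xP] := cov x.
  case: (boolP ((P == u) || (P == v))) => [/orP [] /eqP EP|].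
  - by exists (u :|: v); rewrite /= ?inE ?eqxx ?orbT // -EP xP.
  - by exists (u :|: v); rewrite /= ?inE ?eqxx ?orbT // -EP xP orbT.
  by rewrite negb_or => /andP [nu nv]; exists P; rewrite //= !inE nu nv HP.
have old : forall P, P \in parts (contract s u v) -> P != u :|: v -> 
   [/\ P \in parts s, P != u & P != v].
  move=> P; rewrite /= !inE => /orP [/andP [-> /andP [-> ->]]|->] //.
move=> P Q HP HQ PQ /=.
case: (eqVneq P (u :|: v)) => [EP|nP].
  rewrite -EP eq_sym (negbTE PQ).
  have [HQ' Qu Qv] : [/\ Q \in parts s, Q != u & Q != v].
    by apply: old => //; rewrite -EP eq_sym.
  have [c1u c2u] := col u Q Hu HQ' ltac:(by rewrite eq_sym).
  have [c1v c2v] := col v Q Hv HQ' ltac:(by rewrite eq_sym).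
  split => [/merge_BB [B1 B2]|/merge_NN [B1 B2]] p q;
   rewrite EP inE => /orP [] pP qQ; by [apply: c1u|apply: c1v|apply: c2u|apply: c2v].
case: (eqVneq Q (u :|: v)) => [EQ|nQ].
  have [HP' Pu Pv] := old P HP nP.
  have [c1u c2u] := col P u HP' Hu Pu.
  have [c1v c2v] := col P v HP' Hv Pv.
  split => [/merge_BB [B1 B2]|/merge_NN [B1 B2]] p q;
   rewrite EQ inE => pP /orP [] qQ; by [apply: c1u|apply: c1v|apply: c2u|apply: c2v].
have [HP' _ _] := old P HP nP; have [HQ' _ _] := old Q HQ nQ.
exact: col.
Qed.

Lemma inv_run (V : finType) (G : trigraph V) l s s' :
  inv G s -> run s l = Some s' -> inv G s'.
Proof.
elim: l s => [|[u v] l IH] s /=; first by move=> H [<-].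
case: ifP => // /and3P [Hu Hv Huv] H; apply: IH; exact: inv_contract.
Qed.

Definition fin (V : finType) (F : {set V}) (s : cstate V) : Prop :=
  forall P x y, P \in parts s -> x \in F -> y \in F -> x \in P -> y \in P -> x = y.

Lemma fin_run (V : finType) (G : trigraph V) (F : {set V}) l s s' :
  fin F s -> run s l = Some s' ->
  (forall p, p \in l -> ~~ [exists x in F, exists y in F, involves_pair p.1 p.2 x y]) ->
  fin F s'.
Proof.
elim: l s => [|[u v] l IH] s /=; first by move=> H [<-].
case: ifP => // /and3P [Hu Hv Huv] Hf H Hl; apply: (IH _ _ H).
  have := Hl (u, v) (mem_head _ _) => /= Hn.
  have nip : forall x y, x \in F -> y \in F -> x \in u -> y \in v -> False.
    move=> x y xF yF xu yv; move/negP: Hn; apply; apply/existsP; exists x.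
    rewrite xF /=; apply/existsP; exists y; by rewrite yF /involves_pair xu yv.
  move=> P x y; rewrite /= !inE => /orP [/andP [_ /andP [_ HP]]|/eqP ->].
    exact: Hf.
  move=> xF yF; rewrite !inE => /orP [] xu /orP [] yv.
  - exact: (Hf u).
  - by case: (nip _ _ xF yF xu yv).
  - by case: (nip _ _ yF xF yv xu).
  - exact: (Hf v).
by move=> p pl; apply: Hl; rewrite inE pl orbT.
Qed.

Lemma fin_init (V : finType) (G : trigraph V) F : fin F (init_state G).
Proof. by move=> P x y /imsetP [z _ ->] _ _; rewrite !inE => /eqP -> /eqP ->. Qed.

Lemma merge_redC e1 e2 : isRed (Defs.merge e1 e2) -> isRed (Defs.merge e2 e1).
Proof. by case: e1; case: e2. Qed.

Lemma key (V : finType) (G : trigraph V) (F : {set V}) s u v ya yb P x :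
  inv G s -> fin F s -> u \in parts s -> v \in parts s -> u != v ->
  ya \in u -> yb \in v -> ya \in F -> yb \in F -> P \in parts s -> x \in P ->
  x \in F -> x != ya -> x != yb ->
  isRed (Defs.merge (tadj G ya x) (tadj G yb x)) ->
  [&& P \in parts (contract s u v), isRed (cadj (contract s u v) (u :|: v) P)
    & P :&: F != set0].
Proof.
move=> [cov col] Hf Hu Hv Huv yau ybv yaF ybF HP xP xF xa xb Hred.
have Pu : P != u.
  apply/eqP => E; subst P; by rewrite (Hf u x ya) ?eqxx in xa.
have Pv : P != v.
  apply/eqP => E; subst P; by rewrite (Hf v x yb) ?eqxx in xb.
have Pw : P != u :|: v.
  apply/eqP => E; move: xP; rewrite E inE => /orP [] xin.
    by rewrite (Hf u x ya) ?eqxx in xa.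
  by rewrite (Hf v x yb) ?eqxx in xb.
apply/and3P; split.
- by rewrite /= !inE Pu Pv HP.
- rewrite /= eqxx (negbTE Pw).
  have [c1u c2u] := col u P Hu HP ltac:(by rewrite eq_sym).
  have [c1v c2v] := col v P Hv HP ltac:(by rewrite eq_sym).
  move: Hred; case E1: (cadj s u P); case E2: (cadj s v P) => //=;
    [by rewrite (c2u E1 ya x) // (c2v E2 yb x) |
     by rewrite (c1u E1 ya x) // (c1v E2 yb x)].
- by apply/set0Pn; exists x; rewrite inE xP xF.
Qed.

Unset Implicit Arguments.
Theorem lemma4p6 (V : finType) (G : trigraph V) (a b : 'I_6 -> V) (S : {set V})
  (l : seq ({set V} * {set V})) (k : nat) (s : cstate V) (i j : 'I_6) :
  is_fence G a b -> attached G a b S ->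
  (exists s_end, run (init_state G) l = Some s_end) ->
  k < size l ->
  run (init_state G) (take k l) = Some s ->
  (forall p, p \in take k l ->
     ~~ [exists x in fenceV a b, exists y in fenceV a b,
           involves_pair p.1 p.2 x y]) ->
  involves_pair (nth (set0, set0) l k).1 (nth (set0, set0) l k).2 (a i) (b j) ->
  let w := (nth (set0, set0) l k).1 :|: (nth (set0, set0) l k).2 in
  let s' := contract s (nth (set0, set0) l k).1 (nth (set0, set0) l k).2 in
  3 <= #|[set z in parts s' | isRed (cadj s' w z) & z :&: fenceV a b != set0]|.
Proof.
move=> [ia ib ab [HA HB HAB]] _ [s_end Hend] Hk Hs Hl.
case Ep: (nth (set0, set0) l k) => [u v] /= Hinv.
cbv zeta. set w := u :|: v. set s' := contract s u v.
have [Hu Hv Huv] : [/\ u \in parts s, v \in parts s & u != v].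
  move: Hend; rewrite -(cat_take_drop k l) run_cat Hs /=.
  rewrite (drop_nth (set0, set0) Hk) Ep /=.
  by case: ifP => // /and3P [].
have Iv : inv G s := inv_run (inv_init G) Hs.
have Fn : fin (fenceV a b) s.
  by apply: (@fin_run V G _ _ (init_state G)) Hs Hl; apply: (@fin_init V G).
have /andP [H3 Hun] : (3 <= size (Yseq i j)) && uniq (Yseq i j).
  by move: Ycheck => /allP /(_ i (ordsP i)) /allP /(_ j (ordsP j)).
pose g (t : bool * 'I_6) := if t.1 then b t.2 else a t.2.
have gF : forall t, g t \in fenceV a b.
  case=> [[] k']; rewrite /g /= inE; apply/orP; [right|left];
    by apply/existsP; exists k'.
have ginj : injective g.
  case=> [[] k1] [[] k2]; rewrite /g /= => E.
  - by rewrite (ib _ _ E).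
  - by move: (ab k2 k1); rewrite E eqxx.
  - by move: (ab k1 k2); rewrite E eqxx.
  - by rewrite (ia _ _ E).
have gc1 : forall t, tadj G (a i) (g t) = c1 i j t.
  by case=> [[] k']; rewrite /g /c1 /colA /colAB /= ?HA ?HAB.
have gc2 : forall t, tadj G (b j) (g t) = c2 i j t.
  case=> [[] k']; rewrite /g /c2 /colA /colAB /= ?HB //.
  by rewrite tadj_sym HAB.
pose f (t : bool * 'I_6) := odflt set0 [pick P in parts s | g t \in P].
have fP : forall t, f t \in parts s /\ g t \in f t.
  move=> t; rewrite /f; case: pickP => [P /andP [] //|H].
  have [P HP gP] := Iv.1 (g t).
  by move: (H P); rewrite HP gP.
have Ymem : forall t, t \in Yseq i j ->
    [/\ g t != a i, g t != b j & isRed (Defs.merge (c1 i j t) (c2 i j t))].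
  move=> [[] k']; rewrite mem_filter => /andP [/andP [/andP [t1 t2] t3] _];
    split => //; rewrite /g /=.
  - by rewrite eq_sym ab.
  - by apply: contra t2 => /eqP /ib ->.
  - by apply: contra t1 => /eqP /ia ->.
  - by rewrite ab.
have finj : {in [set t | t \in Yseq i j] &, injective f}.
  move=> t1 t2 _ _ E; apply: ginj.
  have [Pt1 gt1] := fP t1; have [Pt2 gt2] := fP t2.
  rewrite E in gt1.
  exact: (Fn (f t2)).
have sub : f @: [set t | t \in Yseq i j] \subset
   [set z in parts s' | isRed (cadj s' w z) & z :&: fenceV a b != set0].
  apply/subsetP => z /imsetP [t]; rewrite inE => tY ->.
  have [g1 g2 g3] := Ymem t tY; have [Pt gt] := fP t.
  rewrite inE /s' /w; move: Hinv; rewrite /involves_pair => /orP [] /andP [ai bj].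
    apply: (key Iv Fn Hu Hv Huv ai bj (gF (false, i)) (gF (true, j)) Pt gt (gF _) g1 g2).
    by rewrite gc1 gc2.
  apply: (key Iv Fn Hu Hv Huv bj ai (gF (true, j)) (gF (false, i)) Pt gt (gF _) g2 g1).
  by apply: merge_redC; rewrite gc1 gc2.
apply: leq_trans (subset_leq_card sub).
by rewrite card_in_imset // cardsE (card_uniqP Hun).
Qed.
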